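(* Let $n\ge 2$ and let $i,j$ be integers with $1\le i\le n-1$ and $0\le j\le n-1$. For every graph $G^*$ on $n$ vertices with at most one loop per vertex, with adjacency eigenvalues $\lambda_1\ge\lambda_2\ge\cdots\ge\lambda_n$, \[\lambda_{i+1}(G^* )-\lambda_{n-j}(G^* )\le \frac{n}{2}\sqrt{\frac{i+j+1}{i(j+1)}}.\] Consequently, $s_{i,j}\le \frac12\sqrt{\frac{i+j+1}{i(j+1)}}$.
   Context: A graph with at most one loop per vertex on vertex set $\{1,\dots,n\}$ is identified with its adjacency matrix $A=(a_{uv})$, a symmetric $n\times n$ $(0,1)$-matrix where $a_{uv}=1$ iff $uv$ is an edge and $a_{uu}=1$ iff there is a loop at $u$. Its eigenvalues (of $A$) are listed as $\lambda_1\ge\cdots\ge\lambda_n$. For a simple graph $G$ on $n$ vertices, ${\rm spread}_{i,j}(G)=\lambda_{i+1}(G)-\lambda_{n-j}(G)$; ${\rm spread}_{i,j}(n)$ is the maximum of ${\rm spread}_{i,j}(G)$ over all simple graphs $G$ on $n$ vertices, and $s_{i,j}=\lim_{n\to\infty}{\rm spread}_{i,j}(n)/n$ (this limit is known to exist). *)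

(* Defs.v *)
From HB Require Import structures.
From mathcomp Require Import all_boot all_order all_algebra.
From mathcomp Require Import all_classical all_reals all_analysis.
Set Implicit Arguments. Unset Strict Implicit. Unset Printing Implicit Defensive.
Import Order.TTheory GRing.Theory Num.Theory.
Import numFieldNormedType.Exports.
Local Open Scope ring_scope.

(* A graph on vertex set 'I_n (= {1,...,n} shifted to {0,...,n-1}) with at
   most one loop per vertex is given by a symmetric boolean adjacency matrix
   e (e u u = true iff there is a loop at u). *)
Definition loop_graph n (e : 'M[bool]_n) : bool := e^T == e.

Definition simple_graph n (e : 'M[bool]_n) : bool :=
  (e^T == e) && [forall u, ~~ e u u].

Definition adj (R : nzRingType) n (e : 'M[bool]_n) : 'M[R]_n :=
  map_mx (fun b : bool => (b%:R : R)) e.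

Definition is_eigseq (R : realType) n (A : 'M[R]_n) (s : seq R) : Prop :=
  sorted (fun x y : R => y <= x) s /\
  char_poly A = \prod_(x <- s) ('X - x%:P).

(* The (chosen) nonincreasing list of eigenvalues of A; [::] if A has
   non-real eigenvalues (never the case for symmetric A). The list is unique
   when it exists, so the choice is irrelevant. *)
Definition eigs (R : realType) n (A : 'M[R]_n) : seq R :=
  match pselect (exists s, is_eigseq A s) with
  | left h => projT1 (cid h)
  | right _ => [::]
  end.

(* lambda_k(A), 1-indexed: lambda_1 >= ... >= lambda_n. *)
Definition lambda (R : realType) n (A : 'M[R]_n) (k : nat) : R :=
  nth 0 (eigs A) k.-1.

Definition spread (R : realType) (i j : nat) n (e : 'M[bool]_n) : R :=
  lambda (adj R e) i.+1 - lambda (adj R e) (n - j).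

(* spread_{i,j}(n) = max over simple graphs on n vertices; the fold is started
   at the value for the empty (simple) graph, so it is the true maximum. *)
Definition spread_n (R : realType) (i j n : nat) : R :=
  \big[Num.max/spread R i j (const_mx false : 'M[bool]_n)]_(e : 'M[bool]_n | simple_graph e)
     spread R i j e.

(* Main.v *)
Require Import Defs.
From HB Require Import structures.
From mathcomp Require Import all_boot all_order all_algebra.
From mathcomp Require Import all_classical all_reals all_analysis.
From mathcomp Require Import complex ring lra zify.
Import Order.TTheory GRing.Theory Num.Theory.
Import numFieldNormedType.Exports.
Local Open Scope ring_scope.

Module SA.
Set Implicit Arguments. Unset Strict Implicit. Unset Printing Implicit Defensive.
Local Open Scope sesquilinear_scope.
Lemma char_poly_sim (F : comNzRingType) n (Q P D : 'M[F]_n) :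
  Q *m P = 1%:M -> char_poly (Q *m D *m P) = char_poly D.
Proof.
move=> QP; rewrite /char_poly /char_poly_mx !map_mxM.
set Q' := map_mx polyC Q; set P' := map_mx polyC P; set D' := map_mx polyC D.
have QP' : Q' *m P' = 1%:M by rewrite /Q' /P' -map_mxM QP map_mx1.
have XE : ('X%:M : 'M[{poly F}]_n) = Q' *m 'X%:M *m P'.
  by rewrite mul_mx_scalar -scalemxAl QP' scalemx1.
rewrite [in LHS]XE -mulmxBl -mulmxBr !det_mulmx mulrAC -det_mulmx QP' det1.
by rewrite mul1r.
Qed.

Section G.
Variable F : numClosedFieldType.

Lemma trCM_g m n p (A : 'M[F]_(m,n)) (B : 'M[F]_(n,p)) : (A *m B)^t* = B^t* *m A^t*.
Proof. by rewrite trmx_mul map_mxM. Qed.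

Lemma frob_gen n (P M : 'M[F]_n) : P^t* *m P = 1%:M ->
  \tr ((P *m M *m P^t*) *m (P *m M *m P^t*)^t*) = \tr (M *m M^t*).
Proof.
move=> PsP; rewrite !trCM_g trmxCK !mulmxA -[P *m M *m P^t* *m P]mulmxA.
have E : P *m M *m (P^t* *m P) = P *m M by rewrite PsP mulmx1.
rewrite E -!mulmxA mxtrace_mulC !mulmxA.
have E2 : M *m M^t* *m P^t* *m P = M *m M^t* by rewrite -mulmxA PsP mulmx1.
by rewrite E2.
Qed.

Lemma NE_gen n (P A : 'M[F]_n) (d : 'rV[F]_n) (u : 'cV[F]_n) : P *m P^t* = 1%:M ->
  A = P^t* *m diag_mx d *m P ->
  P *m (2%:R *: A - u *m u^t*) *m P^t* = 2%:R *: diag_mx d - (P *m u) *m (P *m u)^t*.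
Proof.
move=> PPs ->; rewrite mulmxBr mulmxBl -!scalemxAr -scalemxAl.
rewrite !mulmxA PPs mul1mx -[diag_mx d *m P *m _]mulmxA PPs mulmx1.
by rewrite trCM_g !mulmxA.
Qed.

Lemma offdiag_g (a b : F) : (- (a * b^*)) * (- (a * b^*))^* = (a * a^*) * (b * b^*).
Proof. by rewrite -!normCK normrN normrM norm_conjC exprMn. Qed.

End G.

Section S.
Variable R : rcfType.
Local Notation C := (R[i]).
Local Notation cr := (real_complex R).

Lemma hermC n (A : 'M[R]_n) : A^T = A ->
  map_mx cr A \is hermsymmx.
Proof.
move=> hA; apply/is_hermitianmxP; rewrite expr0 scale1r.
apply/matrixP=> i j; rewrite !mxE conj_Creal; last first.
  by apply/complex_realP; exists (A j i).
by rewrite -[A in RHS]hA mxE.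
Qed.

Lemma tr_frob n (X : 'M[C]_n) :
  \tr (X *m X^t*) = \sum_k \sum_l X k l * (X k l)^*.
Proof.
rewrite /mxtrace; apply: eq_bigr => k _; rewrite mxE.
by apply: eq_bigr => l _; rewrite !mxE.
Qed.


Lemma trCM m n p (A : 'M[C]_(m,n)) (B : 'M[C]_(n,p)) : (A *m B)^t* = B^t* *m A^t*.
Proof. by rewrite trmx_mul map_mxM. Qed.

Lemma frobC n (A : 'M[R]_n) : A^T = A -> (forall k l, A k l = 0 \/ A k l = 1) ->
  exists dr xr : 'I_n -> R, (forall k, 0 <= xr k) /\
    char_poly A = \prod_(k < n) ('X - (dr k)%:P) /\
    (n%:R ^+ 2 : R) = \sum_k \sum_l
       (if k == l then (2 * dr k - xr k) ^+ 2 else xr k * xr l).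
Proof.
move=> hA h01; set Ac := map_mx cr A.
have hAc := hermC hA.
have AE : Ac = invmx (spectralmx Ac) *m diag_mx (spectral_diag Ac) *m spectralmx Ac.
  by apply/orthomx_spectralP; exact: hermitian_normalmx.
have Pu := spectral_unitarymx Ac.
rewrite invmx_unitary // in AE.
set P := spectralmx Ac in AE Pu; set D := spectral_diag Ac in AE.
have PPs : P *m P^t* = 1%:M by apply/unitarymxP.
have PsP : P^t* *m P = 1%:M by apply: mulmx1C.
have Dr := hermitian_spectral_diag_real hAc; rewrite -/D in Dr.
pose dr k := complex.Re (D 0 k).
have Dk k : D 0 k = cr (dr k) by rewrite RRe_real //; apply: (mxOverP Dr).
pose v := P *m (const_mx 1 : 'cV[C]_n).
pose xr k := complex.Re (v k 0 * (v k 0)^*).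
have xk k : v k 0 * (v k 0)^* = cr (xr k).
  by rewrite RRe_real // ger0_real // mul_conjC_ge0.
exists dr, xr; split; [|split].
- move=> k; rewrite -lecR -xk; exact: mul_conjC_ge0.
- apply: (@map_poly_inj _ _ cr).
  have -> : map_poly cr (char_poly A) = char_poly Ac by rewrite map_char_poly.
  rewrite AE char_poly_sim //.
  rewrite char_poly_trig ?diag_mx_is_trig // rmorph_prod; apply: eq_bigr => k _.
  by rewrite rmorphB /= map_polyX map_polyC mxE eqxx mulr1n Dk.
pose M := 2%:R *: Ac - const_mx 1.
pose N := P *m M *m P^t*.
have u1 : (const_mx 1 : 'M[C]_n) = const_mx 1 *m (const_mx 1 : 'cV[C]_n)^t*.
  apply/matrixP=> k l; rewrite !mxE big_ord1 !mxE conjC1 mulr1 //.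
have NE : N = 2%:R *: diag_mx D - v *m v^t*.
  rewrite /N /M u1. exact: (@NE_gen C n P Ac D (const_mx 1) PPs AE).
have trE : \tr (N *m N^t*) = \tr (M *m M^t*) by rewrite /N frob_gen.
rewrite !tr_frob in trE.
clearbody xr; clearbody v.
have M1 k l : M k l * (M k l)^* = 1.
  rewrite !mxE -normCK; case: (h01 k l) => ->; rewrite ?rmorph0 ?rmorph1.
    by rewrite mulr0 sub0r normrN normr1 expr1n.
  by rewrite mulr1 mulr2n addrK normr1 expr1n.
have MS : \sum_k \sum_l M k l * (M k l)^* = (n%:R ^+ 2 : C).
  rewrite (eq_bigr (fun k => \sum_(l < n) (1 : C))); last by move=> k _; apply: eq_bigr.
  rewrite !sumr_const !card_ord -mulrnA natrM expr2.
  done.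
apply: (@complexI R); rewrite rmorphXn rmorph_nat -MS -trE rmorph_sum.
apply: eq_bigr => k _; rewrite rmorph_sum; apply: eq_bigr => l _.
rewrite NE !mxE big_ord1 !mxE Dk.
case: eqP => [<-|kl].
  have zE : 2 * cr (dr k) - cr (xr k) = cr (2 * dr k - xr k).
    by rewrite rmorphB rmorphM /= rmorph_nat.
  rewrite mulr1n xk zE conj_Creal; last by apply/complex_realP; eexists.
  by rewrite -rmorphM expr2.
rewrite mulr0n mulr0 sub0r offdiag_g !xk rmorphM.
done.
Qed.
End S.

End SA.
Import SA.

Module SB.
Set Implicit Arguments. Unset Strict Implicit. Unset Printing Implicit Defensive.
Section Real.
Variable R : realFieldType.

Lemma sq_max_le (a y : R) : a <= y -> (Num.max a 0) ^+ 2 <= y ^+ 2.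
Proof.
case: (leP a 0) => ha h.
  by rewrite expr0n /= sqr_ge0.
nra.
Qed.

Lemma sq_max_le' (b y : R) : y <= - 2 * b -> 4 * (Num.max b 0) ^+ 2 <= y ^+ 2.
Proof.
case: (leP b 0) => hb h.
  by rewrite expr0n /= mulr0 sqr_ge0.
nra.
Qed.

Lemma sub_sum (I : finType) (A : {pred I}) (g : I -> R) :
  (forall i, 0 <= g i) -> \sum_(i in A) g i <= \sum_i g i.
Proof.
move=> g0; rewrite [X in _ <= X](bigID (mem A)) /= lerDl sumr_ge0 //.
Qed.

Variable n : nat.
Variables (d x : 'I_n -> R).
Hypothesis x0 : forall k, 0 <= x k.
Let T k l := if k == l then (2 * d k - x k) ^+ 2 else x k * x l.

Lemma T_ge0 k l : 0 <= T k l.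
Proof. by rewrite /T; case: eqP => _; rewrite ?sqr_ge0 ?mulr_ge0. Qed.

Lemma top_block (K : {set 'I_n}) (a : R) : (forall k, k \in K -> a <= d k) ->
  4 * ((#|K|.-1)%:R * (Num.max a 0) ^+ 2) <= \sum_(k in K) \sum_(l in K) T k l.
Proof.
move=> hK; case: (set_0Vmem K) => [->|[k1 Kk1]].
  by rewrite cards0 /= mul0r mulr0 big_set0.
set S := \sum_(l in K) x l.
have E k : k \in K -> \sum_(l in K) T k l = 4 * d k ^+ 2 - 4 * (d k * x k) + x k * S.
  move=> Kk; rewrite /S !(big_setD1 k Kk) /= /T eqxx.
  rewrite (eq_bigr (fun l => x k * x l)); last first.
    by move=> l; rewrite !inE => /andP[/negPf lk _]; rewrite eq_sym lk.
  rewrite -mulr_sumr; ring.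
rewrite (eq_bigr _ E) big_split /= sumrB -!mulr_sumr -mulr_suml.
case: (arg_maxP d Kk1) => k0 Kk0' hk0.
have Kk0 : k0 \in K := Kk0'.
have h1 : \sum_(k in K) d k * x k <= d k0 * S.
  rewrite /S mulr_sumr; apply: ler_sum => k Kk; apply: ler_wpM2r => //.
  exact: hk0.
rewrite (big_setD1 k0 Kk0) /=.
have h2 : (#|K :\ k0|%:R * (Num.max a 0) ^+ 2) <= \sum_(k in K :\ k0) d k ^+ 2.
  set c := _ ^+ 2.
  have -> : #|K :\ k0|%:R * c = \sum_(k in K :\ k0) c by rewrite sumr_const mulr_natl.
  apply: ler_sum => k; rewrite !inE => /andP[_ Kk]; exact/sq_max_le/hK.
have -> : #|K|.-1 = #|K :\ k0| by rewrite (cardsD1 k0 K) Kk0.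
set Q := \sum_(k in K :\ k0) _ in h2 *.
set c := _ * _ ^+ 2 in h2 *.
have h3 := sqr_ge0 (2 * d k0 - S).
rewrite -/S; set U := \sum_(i in K) _ in h1 *.
nra.
Qed.


Lemma total_bound (K L : {set 'I_n}) (a b : R) : [disjoint K & L] ->
  (forall k, k \in K -> a <= d k) -> (forall k, k \in L -> d k <= - b) ->
  4 * ((#|K|.-1)%:R * (Num.max a 0) ^+ 2 + #|L|%:R * (Num.max b 0) ^+ 2)
    <= \sum_k \sum_l T k l.
Proof.
move=> dKL hK hL.
have bot : 4 * (#|L|%:R * (Num.max b 0) ^+ 2) <= \sum_(k in L) T k k.
  have -> : 4 * (#|L|%:R * (Num.max b 0) ^+ 2)
            = \sum_(k in L) (4 * (Num.max b 0) ^+ 2).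
    by rewrite sumr_const -mulr_natl; ring.
  apply: ler_sum => k Lk; rewrite /T eqxx; apply: sq_max_le'.
  have := hL k Lk; have := x0 k; lra.
have topb := top_block hK.
have spl : \sum_(k in K) \sum_(l in K) T k l + \sum_(k in L) T k k
           <= \sum_k \sum_l T k l.
  rewrite [X in _ <= X](bigID (mem K)) /=; apply: lerD.
    by apply: ler_sum => k _; apply: sub_sum => l; exact: T_ge0.
  have -> : \sum_(k in L) T k k = \sum_(k | ~~ (k \in K) && (k \in L)) T k k.
    apply: eq_bigl => k; case Lk: (k \in L); rewrite ?andbF ?andbT //.
    by rewrite (disjointFl dKL Lk).
  apply: (@le_trans _ _ (\sum_(k | ~~ (k \in K) && (k \in L)) \sum_l T k l)).
    apply: ler_sum => k _; rewrite (bigD1 k) //= lerDl sumr_ge0 // => l _.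
    exact: T_ge0.
  rewrite [X in _ <= X](bigID (mem L)) /= lerDl sumr_ge0 // => k _.
  by apply: sumr_ge0 => l _; exact: T_ge0.
lra.
Qed.

End Real.

Lemma final_ineq (R : rcfType) (a b N p q : R) : 0 < p -> 0 < q -> 0 <= N ->
  0 < a + b ->
  4 * (p * (Num.max a 0) ^+ 2 + q * (Num.max b 0) ^+ 2) <= N ^+ 2 ->
  a + b <= N / 2 * Num.sqrt ((p + q) / (p * q)).
Proof.
move=> p0 q0 N0 ab h.
have ha : a <= Num.max a 0 by rewrite le_max lexx.
have hb : b <= Num.max b 0 by rewrite le_max lexx.
have ha0 : 0 <= Num.max a 0 by rewrite le_max lexx orbT.
have hb0 : 0 <= Num.max b 0 by rewrite le_max lexx orbT.
move: h ha hb ha0 hb0; set a' := Num.max a 0; set b' := Num.max b 0 => h ha hb ha0 hb0.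
set t := a' + b'.
have pq0 : 0 < p * q by rewrite mulr_gt0.
have h1 : t ^+ 2 * (p * q) <= (p + q) * (p * a' ^+ 2 + q * b' ^+ 2).
  have := sqr_ge0 (p * a' - q * b'); rewrite /t; nra.
have h2 : t ^+ 2 * (p * q) <= (p + q) * N ^+ 2 / 4.
  apply: (le_trans h1); nra.
have r0 : 0 <= (p + q) / (p * q) by rewrite divr_ge0 // ltW // addr_gt0.
have h3 : t ^+ 2 <= (N / 2 * Num.sqrt ((p + q) / (p * q))) ^+ 2.
  rewrite exprMn sqr_sqrtr // mulrA ler_pdivlMr //.
  apply: (le_trans h2); rewrite le_eqVlt; apply/orP; left; apply/eqP; field.
  done.
have s0 := sqrtr_ge0 ((p + q) / (p * q)).
have Y0 : 0 <= N / 2 * Num.sqrt ((p + q) / (p * q)).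
  by rewrite mulr_ge0 // divr_ge0.
have t0 : 0 <= t by rewrite /t addr_ge0.
suff : t <= N / 2 * Num.sqrt ((p + q) / (p * q)) by rewrite /t; lra.
move: h3 Y0; generalize (N / 2 * Num.sqrt ((p + q) / (p * q))) => Y h3 Y0.
nra.
Qed.

End SB.
Import SB.

Lemma card_count (R : realType) n (f : 'I_n -> R) (P : pred R) :
  #|[set k | P (f k)]| = count P [seq f k | k <- enum 'I_n].
Proof.
rewrite count_map cardE /enum_mem size_filter count_filter.
by apply: eq_count => k; rewrite !inE /= andbT.
Qed.

Lemma part1 (R : realType) (n i j : nat) (e : 'M[bool]_n) :
     (2 <= n)%N -> (1 <= i <= n.-1)%N -> (j <= n.-1)%N -> loop_graph e ->
     lambda (adj R e) i.+1 - lambda (adj R e) (n - j)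
       <= (n%:R / 2) * Num.sqrt ((i + j + 1)%:R / (i * (j + 1))%:R).
Proof.
move=> hn /andP[hi1 hin] hj he.
have RHS0 : 0 <= (n%:R / 2) * Num.sqrt ((i + j + 1)%:R / (i * (j + 1))%:R :> R).
  by rewrite mulr_ge0 ?sqrtr_ge0 // divr_ge0.
set A := adj R e.
have hA : A^T = A.
  by apply/matrixP => k l; rewrite !mxE; move/eqP: he => /matrixP /(_ l k); rewrite mxE => ->.
have h01 : forall k l, A k l = 0 \/ A k l = 1.
  by move=> k l; rewrite !mxE; case: (e k l); [right|left].
have [dr [xr [x0 [cpE frobE]]]] := frobC hA h01.
set t := [seq dr k | k <- enum 'I_n].
have cpE' : char_poly A = \prod_(y <- t) ('X - y%:P).
  by rewrite cpE big_map big_enum.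
rewrite /lambda /eigs; case: pselect => [h|nh]; last by rewrite !nth_nil subrr.
case: (cid h) => s [ss sp] /=.
have pst : perm_eq s t by apply: prod_XsubC_eq; rewrite -sp -cpE'.
have sz : size s = n by rewrite (perm_size pst) size_map size_enum_ord.

set a := nth 0 s i; set c := nth 0 s (n - j).-1.
have [abn|abp] := leP (a - c) 0; first exact: le_trans abn RHS0.
have hin' : (i < n)%N by lia.
set le := fun x y : R => y <= x.
pose pa := fun y : R => a <= y.
pose pc := fun y : R => y <= c.
have tr : transitive le by move=> y x z h1 h2; exact: le_trans h2 h1.
have rf : reflexive le by move=> x; exact: lexx.
have cK : (i.+1 <= count pa s)%N.
  have top : all pa (take i.+1 s).
    apply/(all_nthP 0) => k; rewrite size_takel ?sz // => hk.
    rewrite nth_take //.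
    apply: (sorted_leq_nth tr rf 0 ss); rewrite ?inE ?sz //.
    exact: leq_trans hk hin'.
  rewrite -(cat_take_drop i.+1 s) count_cat.
  move: top; rewrite all_count => /eqP ->; rewrite size_takel ?sz //.
  exact: leq_addr.
set m := (n - j).-1.
have hm : (m < n)%N by rewrite /m; lia.
have cL : (j.+1 <= count pc s)%N.
  have bot : all pc (drop m s).
    apply/(all_nthP 0) => k; rewrite size_drop sz => hk.
    rewrite nth_drop.
    apply: (sorted_leq_nth tr rf 0 ss); rewrite ?inE ?sz //; lia.
  rewrite -(cat_take_drop m s) count_cat.
  move: bot; rewrite all_count => /eqP ->; rewrite size_drop sz.
  have -> : (n - m = j.+1)%N by rewrite /m; lia.
  exact: leq_addl.
set K := [set k | pa (dr k)]; set L := [set k | pc (dr k)].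
have cardK : #|K| = count pa s by rewrite /K card_count -/t (permP pst).
have cardL : #|L| = count pc s by rewrite /L card_count -/t (permP pst).
have disj : [disjoint K & L].
  rewrite disjoint_subset; apply/fintype.subsetP => k; rewrite !inE /pa /pc => h1.
  rewrite -ltNge; lra.
have hK : forall k, k \in K -> a <= dr k by move=> k; rewrite inE.
have hL : forall k, k \in L -> dr k <= - (- c) by move=> k; rewrite inE opprK.
have tb := total_bound x0 disj hK hL.
rewrite -frobE in tb.
have iK : (i%:R : R) <= (#|K|.-1)%:R by rewrite ler_nat cardK; lia.
have jL : ((j.+1)%:R : R) <= #|L|%:R by rewrite ler_nat cardL.
have ha0 : 0 <= Num.max a 0 ^+ 2 by rewrite sqr_ge0.
have hb0 : 0 <= Num.max (- c) 0 ^+ 2 by rewrite sqr_ge0.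
have tb' : 4 * (i%:R * Num.max a 0 ^+ 2 + (j.+1)%:R * Num.max (- c) 0 ^+ 2) <= n%:R ^+ 2.
  apply: le_trans tb; rewrite ler_pM2l //; apply: lerD; apply: ler_wpM2r => //.
have -> : ((i + j + 1)%:R : R) = i%:R + (j.+1)%:R by rewrite -addnA addn1 natrD.
have -> : ((i * (j + 1))%:R : R) = i%:R * (j.+1)%:R by rewrite addn1 natrM.
apply: final_ineq => //; by rewrite ltr0n.
Qed.

Lemma part2 (R : realType) (i j : nat) (s : R) : (1 <= i)%N ->
     ((fun n : nat => spread_n R i j n / n%:R) @ \oo --> s)%classic ->
     s <= 2^-1 * Num.sqrt ((i + j + 1)%:R / (i * (j + 1))%:R).
Proof.
move=> hi cv; apply: (cvgr_to_le cv).
exists (i + j + 2)%N => // m /= hm.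
set r := Num.sqrt _.
have cond1 : (2 <= m)%N by lia.
have cond2 : (1 <= i <= m.-1)%N by apply/andP; split => //; lia.
have cond3 : (j <= m.-1)%N by lia.
have hb : spread_n R i j m <= m%:R / 2 * r.
  rewrite /spread_n; apply: (big_ind (fun y => y <= m%:R / 2 * r)).
  - apply: part1 => //; rewrite /loop_graph; apply/eqP/matrixP => k l; rewrite !mxE.
    done.
  - by move=> x y hx hy; rewrite ge_max hx hy.
  - by move=> e /andP[he _]; apply: part1.
have m0 : (0 : R) < m%:R by rewrite ltr0n; lia.
rewrite ler_pdivrMr //.
have r0 : 0 <= r by apply: sqrtr_ge0.
lra.
Qed.

Theorem theorem1p1 (R : realType) :
  (forall (n i j : nat) (e : 'M[bool]_n),
     (2 <= n)%N -> (1 <= i <= n.-1)%N -> (j <= n.-1)%N -> loop_graph e ->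
     lambda (adj R e) i.+1 - lambda (adj R e) (n - j)
       <= (n%:R / 2) * Num.sqrt ((i + j + 1)%:R / (i * (j + 1))%:R))
  /\
  (forall (i j : nat) (s : R), (1 <= i)%N ->
     ((fun n : nat => spread_n R i j n / n%:R) @ \oo --> s)%classic ->
     s <= 2^-1 * Num.sqrt ((i + j + 1)%:R / (i * (j + 1))%:R)).
Proof.
split; [exact: part1 | exact: part2].
Qed.
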